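(* Let $L$ be the Kirchhoff matrix and $\bar J$ the normalized matrix of maximum out-forests of a weighted digraph $\Gamma$. Then $\bar J$ is the eigenprojection of $L$, i.e., $\bar J$ is the idempotent matrix with range $N(L^{\nu})$ and kernel $R(L^{\nu})$, where $\nu$ is the index of $L$ (in fact $\nu=1$, so the range of $\bar J$ is $N(L)$ and its kernel is $R(L)$).
   Context: A weighted digraph $\Gamma$ has vertex set $\{1,\dots,n\}$, no loops, and each arc $j\to i$ ($j\ne i$) has a positive weight $a_{ij}$; $a_{ij}=0$ if there is no such arc. Its Kirchhoff matrix $L=[\ell_{ij}]$ has $\ell_{ij}=-a_{ij}$ for $j\ne i$ and $\ell_{ii}=\sum_{k\ne i}a_{ik}$. An out-forest of $\Gamma$ is a spanning subgraph whose weak components are diverging trees (rooted directed trees with paths from the root to all vertices); a maximum out-forest is one with the maximum number of arcs. The weight of a subgraph is the product of its arc weights. The normalized matrix of maximum out-forests $\bar J$ has $\bar J_{ij}$ equal to the total weight of the maximum out-forests of $\Gamma$ in which $i$ belongs to the tree rooted at $j$, divided by the total weight of all maximum out-forests. For a square matrix $A$, $R(A)$ and $N(A)$ denote range and kernel, and the index of $A$ is the least $k\ge0$ with $\operatorname{rank}A^{k+1}=\operatorname{rank}A^k$. *)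

(* Defs.v *)
From Stdlib Require Import Classical.
From HB Require Import structures.
From mathcomp Require Import all_boot all_order all_algebra.
Set Implicit Arguments. Unset Strict Implicit. Unset Printing Implicit Defensive.
Import Order.TTheory GRing.Theory Num.Theory.
Local Open Scope ring_scope.

(* A weighted digraph on vertices 'I_n is given by a : 'M[R]_n with
   a i j > 0 the weight of the arc j -> i, a i j = 0 if there is no arc,
   and a i i = 0 (no loops). *)

(* Arcs are encoded as pairs (tail, head): (j, i) stands for j -> i. *)
Definition arc_set n := {set 'I_n * 'I_n}.

Section Forests.
Variables (R : realFieldType) (n : nat) (a : 'M[R]_n).

Definition kirchhoff : 'M[R]_n :=
  \matrix_(i, j) (if i == j then \sum_(k | k != i) a i k else - a i j).

Definition subgraph (F : arc_set n) : bool :=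
  [forall e in F, (e.1 != e.2) && (0 < a e.2 e.1)].

Definition darc (F : arc_set n) : rel 'I_n := fun u v => (u, v) \in F.
Definition warc (F : arc_set n) : rel 'I_n :=
  fun u v => ((u, v) \in F) || ((v, u) \in F).

Definition wcomp (F : arc_set n) (v : 'I_n) : {set 'I_n} :=
  [set u | connect (warc F) v u].

Definition arcs_in (F : arc_set n) (C : {set 'I_n}) : arc_set n :=
  [set e in F | (e.1 \in C) && (e.2 \in C)].

Definition diverging_tree_comp (F : arc_set n) (C : {set 'I_n}) : bool :=
  [&& #|arcs_in F C| == #|C|.-1,
      [forall u in C, forall v in C, connect (warc (arcs_in F C)) u v] &
      [exists r in C, forall v in C, connect (darc (arcs_in F C)) r v]].

Definition out_forest (F : arc_set n) : bool :=
  subgraph F && [forall v, diverging_tree_comp F (wcomp F v)].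

Definition max_forest_size : nat :=
  \max_(F : arc_set n | out_forest F) #|F|.

Definition max_out_forest (F : arc_set n) : bool :=
  out_forest F && (#|F| == max_forest_size).

Definition weight (F : arc_set n) : R := \prod_(e in F) a e.2 e.1.

Definition in_tree_rooted (F : arc_set n) (i j : 'I_n) : bool :=
  (j \in wcomp F i) && [forall v in wcomp F i, connect (darc F) j v].

Definition Jbar : 'M[R]_n :=
  \matrix_(i, j)
    ((\sum_(F : arc_set n | max_out_forest F && in_tree_rooted F i j) weight F)
     / (\sum_(F : arc_set n | max_out_forest F) weight F)).

End Forests.

Lemma index_exists (R : fieldType) (n : nat) (A : 'M[R]_n) :
  exists k, \rank (A ^+ k.+1) == \rank (A ^+ k).
Proof.
apply: NNPP => H.
have lt k : (\rank (A ^+ k.+1) < \rank (A ^+ k))%N.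
  rewrite ltn_neqAle; apply/andP; split.
    by apply/negP => E; apply: H; exists k.
  by rewrite GRing.exprS; apply: mxrankM_maxr.
have le k : (\rank (A ^+ k) + k <= n)%N.
  elim: k => [|k IH]; first by rewrite addn0 rank_leq_col.
  by rewrite addnS; apply: leq_trans IH; rewrite ltn_add2r.
by have := le n.+1; rewrite addnS ltnNge leq_addl.
Qed.

Definition mxindex (R : fieldType) (n : nat) (A : 'M[R]_n) : nat :=
  ex_minn (index_exists A).

(* Main.v *)
Require Import Defs.
From HB Require Import structures.
From mathcomp Require Import all_boot all_order all_algebra.
Set Implicit Arguments. Unset Strict Implicit. Unset Printing Implicit Defensive.
Import Order.TTheory GRing.Theory Num.Theory.

Lemma reach_closed (T : finType) (e : rel T) (S : pred T) r w :
  (forall x y, e x y -> S y -> S x) -> connect e r w -> S w -> S r.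
Proof.
move=> cl /connectP [p]; elim: p r => [|y p IH] r /=; first by move=> _ ->.
by case/andP=> exy py lw Sw; apply: cl exy _; apply: IH py lw Sw.
Qed.

Section ForestComb.
Variable n : nat.
Implicit Types F G : {set 'I_n * 'I_n}.

Definition isroot F v := [forall u, (u, v) \notin F].
Definition indeg1 F := forall u u' v, (u, v) \in F -> (u', v) \in F -> u = u'.
Definition hgt F := exists h : 'I_n -> nat, forall u v, (u, v) \in F -> (h u < h v)%N.
Definition dforest F := indeg1 F /\ hgt F.

Lemma isrootP F v : reflect (forall u, (u, v) \notin F) (isroot F v).
Proof. exact: forallP. Qed.

Lemma nrootP F v : reflect (exists u, (u, v) \in F) (~~ isroot F v).
Proof.
apply: (iffP forallPn) => [[u /negPn]|[u uv]]; first by exists u.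
by exists u; rewrite uv.
Qed.

Lemma reach_last F x v : connect (darc F) x v -> x != v ->
  exists2 u, (u, v) \in F & connect (darc F) x u.
Proof.
case/connectP=> p; case/lastP: p => [|q y] /=; first by move=> _ ->; rewrite eqxx.
rewrite rcons_path last_rcons => /andP[pq e] -> _.
by exists (last x q) => //; apply/connectP; exists q.
Qed.

Lemma reach_first F x v : connect (darc F) x v -> x != v ->
  exists2 c, (x, c) \in F & connect (darc F) c v.
Proof.
case/connectP=> [[|c p]] /=; first by move=> _ ->; rewrite eqxx.
by case/andP=> xc pc -> _; exists c => //; apply/connectP; exists p.
Qed.

Lemma forest_ind F (P : 'I_n -> Prop) : hgt F ->
  (forall v, (forall u, (u, v) \in F -> P u) -> P v) -> forall v, P v.
Proof.
case=> h hP IH v; have [k] := ubnP (h v); elim: k v => // k IHk v hv.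
by apply: IH => u uv; apply: IHk; apply: leq_trans (hP _ _ uv) hv.
Qed.

Lemma root_reach F r v : isroot F v -> connect (darc F) r v -> r = v.
Proof.
move=> /isrootP rv rr; apply/eqP.
apply: (reach_closed (S := fun w => w == v)) rr _ => //.
by move=> x y xy /eqP yv; move: xy; rewrite /darc yv (negbTE (rv x)).
Qed.

Lemma reach_h F (h : 'I_n -> nat) : (forall u v, (u, v) \in F -> (h u < h v)%N) ->
  forall x y, connect (darc F) x y -> (h x <= h y)%N.
Proof.
move=> hP x y xy.
apply: (reach_closed (S := fun w => h w <= h y)%N) xy _ => //.
by move=> u v uv hv; apply: leq_trans hv; apply: ltnW; apply: hP.
Qed.

Lemma acyc F u v : hgt F -> (u, v) \in F -> ~~ connect (darc F) v u.
Proof.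
case=> h hP uv; apply/negP => /(reach_h hP); rewrite leqNgt.
by rewrite hP.
Qed.

Lemma exists_root F v : hgt F -> exists2 r, isroot F r & connect (darc F) r v.
Proof.
move=> hF; move: v; apply: (forest_ind hF) => v IH.
case: (boolP (isroot F v)) => rv; first by exists v.
case/nrootP: rv => u uv; have [r rr ru] := IH u uv.
by exists r => //; apply: connect_trans ru (connect1 _).
Qed.

Lemma reach_lin F x y v : dforest F -> connect (darc F) x v -> connect (darc F) y v ->
  connect (darc F) x y || connect (darc F) y x.
Proof.
case=> i1 hF; move: v x y; apply: (forest_ind hF) => v IH x y xv yv.
case: (eqVneq x v) => [->|xnv]; first by rewrite yv orbT.
case: (eqVneq y v) => [->|ynv]; first by rewrite xv.
have [u uv xu] := reach_last xv xnv; have [u' u'v yu'] := reach_last yv ynv.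
by rewrite (i1 _ _ _ u'v uv) in yu'; apply: IH uv _ _ xu yu'.
Qed.

Definition rho F v := odflt v [pick r | isroot F r && connect (darc F) r v].

Lemma rhoP F v : hgt F -> isroot F (rho F v) /\ connect (darc F) (rho F v) v.
Proof.
move=> hF; rewrite /rho; case: pickP => [r /andP[]//|none].
by have [r rr rv] := exists_root v hF; move: (none r); rewrite rr rv.
Qed.

Lemma roots_eq F r r' v : dforest F -> isroot F r -> isroot F r' ->
  connect (darc F) r v -> connect (darc F) r' v -> r = r'.
Proof.
move=> fF rr rr' rv r'v; case/orP: (reach_lin fF rv r'v) => [/root_reach|/root_reach].
  by apply.
by move=> h; apply/esym/h.
Qed.

Lemma rho_uniq F r v : dforest F -> isroot F r -> connect (darc F) r v -> rho F v = r.
Proof.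
move=> fF rr rv; have [r1 r1v] := rhoP v fF.2.
by apply: roots_eq fF r1 rr r1v rv.
Qed.

Lemma rho_reach F u v : dforest F -> connect (darc F) u v -> rho F u = rho F v.
Proof.
move=> fF uv; have [r1 r1u] := rhoP u fF.2.
by apply/esym/rho_uniq => //; apply: connect_trans r1u uv.
Qed.

Lemma rho_arc F u v : dforest F -> (u, v) \in F -> rho F u = rho F v.
Proof. by move=> fF uv; apply: rho_reach => //; apply: connect1. Qed.

Lemma rho_root F r : dforest F -> isroot F r -> rho F r = r.
Proof. by move=> fF rr; apply: rho_uniq. Qed.

Lemma rho_isroot F v : dforest F -> isroot F (rho F v).
Proof. by move=> fF; case: (rhoP v fF.2). Qed.

Lemma rho_reach1 F v : dforest F -> connect (darc F) (rho F v) v.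
Proof. by move=> fF; case: (rhoP v fF.2). Qed.

Lemma rho_rho F v : dforest F -> rho F (rho F v) = rho F v.
Proof. by move=> fF; apply: rho_root => //; apply: rho_isroot. Qed.

Lemma warc_sym F : symmetric (warc F).
Proof. by move=> x y; rewrite /warc orbC. Qed.

Lemma darc_warc F x y : connect (darc F) x y -> connect (warc F) x y.
Proof.
by apply: connect_sub => u v uv; apply: connect1; apply/orP; left.
Qed.

Lemma wcompE F v : dforest F -> wcomp F v = [set u | rho F u == rho F v].
Proof.
move=> fF; apply/setP => u; rewrite !inE; apply/idP/idP.
  move=> vu; rewrite eq_sym.
  apply: (reach_closed (S := fun w => rho F w == rho F u)) vu _ => //.
  move=> x y /orP[xy|yx] /eqP <-; apply/eqP; first exact: rho_arc.
  by apply/esym/rho_arc.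
move/eqP=> e; apply: (@connect_trans _ _ (rho F v)).
  by rewrite (sym_connect_sym (@warc_sym F)); apply: darc_warc; apply: rho_reach1.
by rewrite -e; apply: darc_warc; apply: rho_reach1.
Qed.

Lemma itrE F i j : dforest F -> in_tree_rooted F i j = (rho F i == j).
Proof.
move=> fF; rewrite /in_tree_rooted wcompE // inE; apply/idP/idP.
  case/andP=> /eqP ej /forall_inP H.
  have := H (rho F i); rewrite inE rho_rho // eqxx => /(_ isT) jr.
  by rewrite -(root_reach (rho_isroot _ fF) jr) eqxx.
move/eqP=> <-; rewrite rho_rho // eqxx /=; apply/forall_inP => v.
rewrite inE => /eqP <-; exact: rho_reach1.
Qed.

End ForestComb.

Section ForestEquiv.
Variable n : nat.
Implicit Types F G : {set 'I_n * 'I_n}.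

Lemma forest_dtc F : dforest F -> forall v, diverging_tree_comp F (wcomp F v).
Proof.
move=> fF v; rewrite wcompE //; set r := rho F v; set C := [set u | rho F u == r].
have rC : r \in C by rewrite inE /r rho_rho.
have rr : isroot F r by apply: rho_isroot.
have reachC : forall u, rho F u == r -> connect (darc (arcs_in F C)) r u.
  move=> u; move: u; apply: (forest_ind fF.2) => u IH /eqP ru.
  case: (boolP (isroot F u)) => [ur|/nrootP [p pu]].
    by rewrite -ru rho_root.
  have rp : rho F p = r by rewrite (rho_arc fF pu).
  apply: connect_trans (IH p pu _) (connect1 _); first by rewrite rp.
  by rewrite /darc /arcs_in inE pu /= !inE rp ru eqxx.
apply/and3P; split.
- have inj : {in arcs_in F C &, injective (fun e : 'I_n * 'I_n => e.2)}.
    move=> [u1 v1] [u2 v2]; rewrite !inE /= => /andP[e1 _] /andP[e2 _] /= eq.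
    by subst v2; rewrite (fF.1 _ _ _ e1 e2).
  rewrite -(card_in_imset inj).
  have -> : [set e.2 | e in arcs_in F C] = C :\ r.
    apply/setP => w; rewrite !inE; apply/imsetP/andP.
      case=> [[u w']] /=; rewrite !inE /= => /andP[uw /andP[_ wC]] ->; split => //.
      by apply/eqP => wr; move/isrootP: rr => /(_ u); rewrite -wr uw.
    case=> wr wC; have : ~~ isroot F w.
      by apply/negP => wroot; move: wC; rewrite rho_root // (negbTE wr).
    case/nrootP=> p pw; exists (p, w) => //.
    by rewrite !inE pw /= (rho_arc fF pw) wC.
  by rewrite (cardsD1 r C) rC.
- apply/forall_inP => u uC; apply/forall_inP => w wC.
  apply: (@connect_trans _ _ r).
    rewrite (sym_connect_sym (@warc_sym _ _)); apply: darc_warc; apply: reachC.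
    by rewrite inE in uC.
  by apply: darc_warc; apply: reachC; rewrite inE in wC.
- apply/exists_inP; exists r => //; apply/forall_inP => w wC; apply: reachC.
  by rewrite inE in wC.
Qed.

Lemma arcs_inE F (C : {set 'I_n}) e :
  (e \in arcs_in F C) = (e \in F) && (e.1 \in C) && (e.2 \in C).
Proof. by rewrite /arcs_in inE andbA. Qed.

Lemma inC F v x y : (x, y) \in F -> (x \in wcomp F v) = (y \in wcomp F v).
Proof.
move=> xy; rewrite !inE; apply/idP/idP => H; apply: connect_trans H (connect1 _);
  by rewrite /warc xy ?orbT.
Qed.

Lemma comp_facts F v : diverging_tree_comp F (wcomp F v) ->
  exists r, [/\ r \in wcomp F v, isroot F r,
     forall w, w \in wcomp F v -> connect (darc F) r w &
     {in arcs_in F (wcomp F v) &, injective (fun e : 'I_n * 'I_n => e.2)}].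
Proof.
set C := wcomp F v; set A := arcs_in F C.
case/and3P=> /eqP cardA _ /exists_inP [r rC /forall_inP rA].
have vC : v \in C by rewrite inE connect0.
set Hd := [set e.2 | e in A].
have sub1 : C :\ r \subset Hd.
  apply/subsetP => w; rewrite in_setD1 => /andP[wr wC].
  have rw : r != w by rewrite eq_sym.
  have [u uw _] := reach_last (rA w wC) rw.
  by apply/imsetP; exists (u, w).
have l1 : (#|Hd| <= #|A|)%N by apply: leq_imset_card.
have l2 : (#|C :\ r| <= #|Hd|)%N by apply: subset_leq_card.
have cC : #|C| = (#|C :\ r|).+1 by rewrite (cardsD1 r C) rC.
have inj : #|Hd| == #|A| by rewrite eqn_leq l1 cardA cC.
have rHd : r \notin Hd.
  apply/negP => rH; have : C \subset Hd.
    apply/subsetP => w wC; case: (eqVneq w r) => [->//|wr].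
    by apply: (subsetP sub1); rewrite in_setD1 wr wC.
  move/subset_leq_card; rewrite cC; move/eqP: inj => ->; rewrite cardA cC /=.
  by rewrite ltnn.
exists r; split => //.
- apply/isrootP => u; apply/negP => ur; move/negP: rHd; apply; apply/imsetP.
  by exists (u, r) => //; rewrite /A /arcs_in in_set ur /= (inC v ur) rC.
- move=> w wC; move: (rA w wC); apply: connect_sub => x y xy; apply: connect1.
  by move: xy; rewrite /darc inE => /andP[].
- exact/imset_injP.
Qed.

Lemma dtc_forest F : (forall v, diverging_tree_comp F (wcomp F v)) -> dforest F.
Proof.
move=> H.
have i1 : indeg1 F.
  move=> u u' w uw u'w; have [r [_ _ _ inj]] := comp_facts (H w).
  have wC : w \in wcomp F w by rewrite inE connect0.
  have := inj (u, w) (u', w); rewrite !arcs_inE uw u'w /= (inC w uw) (inC w u'w) wC.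
  by move=> /(_ isT isT erefl) [].
split => //.
have nocyc : forall u w, (u, w) \in F -> ~~ connect (darc F) w u.
  move=> u w uw; apply/negP => wu.
  have [r [rC rr rreach _]] := comp_facts (H w).
  have wC : w \in wcomp F w by rewrite inE connect0.
  have : connect (darc F) w r && connect (darc F) r w.
    apply: (reach_closed (S := fun x => connect (darc F) w x && connect (darc F) x w))
      (rreach w wC) _; last by rewrite !connect0.
    move=> x y xy /andP[wy yw]; rewrite (connect_trans (connect1 xy) yw) andbT.
    case: (eqVneq w y) => [ey|wny]; first by subst y; rewrite (i1 _ _ _ xy uw).
    have [x' x'y wx'] := reach_last wy wny; by rewrite (i1 _ _ _ xy x'y).
  case/andP=> wr _; case: (eqVneq w r) => [ewr|wnr].
    by subst r; move/isrootP: rr => /(_ u); rewrite uw.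
  have [x xr _] := reach_last wr wnr; by move/isrootP: rr => /(_ x); rewrite xr.
exists (fun w => #|[set u | connect (darc F) u w]|) => u w uw.
apply: proper_card; apply/properP; split.
  apply/subsetP => x; rewrite !inE => xu; apply: connect_trans xu (connect1 uw).
by exists w; rewrite !inE ?connect0 // (negbTE (nocyc _ _ uw)).
Qed.

Lemma out_forestP (R : realFieldType) (a : 'M[R]_n) F :
  out_forest a F <-> subgraph a F /\ dforest F.
Proof.
rewrite /out_forest; split.
  by case/andP=> sF /forallP H; split => //; apply: dtc_forest.
by case=> sF fF; rewrite sF /=; apply/forallP; apply: forest_dtc.
Qed.

End ForestEquiv.

Section Ops.
Variable n : nat.
Implicit Types F G : {set 'I_n * 'I_n}.

Lemma nreach_arc F i u v : indeg1 F -> (u, v) \in F -> v != i ->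
  ~~ connect (darc F) i u -> ~~ connect (darc F) i v.
Proof.
move=> i1 uv vi; apply: contra => iv.
have iv' : i != v by rewrite eq_sym.
have [u' u'v iu'] := reach_last iv iv'.
by rewrite (i1 _ _ _ uv u'v).
Qed.

Definition reattach F i k := [set e in F | e.2 != i] :|: [set (k, i)].
Definition reroot F r w x := [set e in F | e.2 != w] :|: [set (x, r)].

Lemma reattachE F i k e :
  (e \in reattach F i k) = ((e \in F) && (e.2 != i)) || (e == (k, i)).
Proof. by rewrite /reattach !inE. Qed.

Lemma rerootE F r w x e :
  (e \in reroot F r w x) = ((e \in F) && (e.2 != w)) || (e == (x, r)).
Proof. by rewrite /reroot !inE. Qed.

Lemma reattach_forest F i k : dforest F -> ~~ connect (darc F) i k ->
  dforest (reattach F i k).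
Proof.
case=> i1 [h hP] nik; split.
  move=> u u' v; rewrite !reattachE.
  case/orP=> [/andP[uv vi]|/eqP[eu ev]]; case/orP=> [/andP[u'v vi']|/eqP[eu' ev']].
  - exact: i1 uv u'v.
  - by rewrite ev' eqxx in vi.
  - by rewrite ev eqxx in vi'.
  - by rewrite eu eu'.
exists (fun v => h v + (connect (darc F) i v) * (h k).+1)%N.
move=> u v; rewrite reattachE => /orP[/andP[uv vi]|/eqP[-> ->]].
  case: (boolP (connect (darc F) i u)) => iu.
    have iv : connect (darc F) i v := connect_trans iu (connect1 uv).
    by rewrite iv ltn_add2r; apply: hP.
  by rewrite (negbTE (nreach_arc i1 uv vi iu)) !mul0n !addn0; apply: hP.
by rewrite (negbTE nik) connect0 mul0n addn0 mul1n addnS ltnS leq_addl.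
Qed.

Lemma isroot_reattach F i k y : isroot F y -> y != i -> isroot (reattach F i k) y.
Proof.
move=> /isrootP ry yi; apply/isrootP => u; rewrite reattachE negb_or.
by rewrite (negbTE (ry u)) /= xpair_eqE negb_and yi orbT.
Qed.

Lemma rho_reattach F i k v : dforest F -> ~~ connect (darc F) i k ->
  rho (reattach F i k) v = if connect (darc F) i v then rho F k else rho F v.
Proof.
move=> fF nik; have fG := reattach_forest fF nik; set G := reattach F i k.
have inG : forall u v, (u, v) \in F -> v != i -> (u, v) \in G.
  by move=> u w uw wi; rewrite reattachE uw wi.
have Q : forall v, ~~ connect (darc F) i v -> connect (darc G) (rho F v) v.
  apply: (forest_ind fF.2) => w IH niw.
  case: (boolP (isroot F w)) => [rw|/nrootP[u uw]].
    by rewrite rho_root // connect0.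
  have wi : w != i by apply: contraNneq niw => ->; apply: connect0.
  have niu : ~~ connect (darc F) i u.
    by apply: contraNN niw => iu; apply: connect_trans iu (connect1 uw).
  rewrite -(rho_arc fF uw); apply: connect_trans (IH u uw niu) (connect1 _).
  exact: inG.
have P : forall v, connect (darc F) i v -> connect (darc G) (rho F k) v.
  apply: (forest_ind fF.2) => w IH iw.
  case: (eqVneq w i) => [->|wi].
    by apply: connect_trans (Q k nik) (connect1 _); rewrite /darc /G reattachE; apply/orP; right.
  have iw' : i != w by rewrite eq_sym.
  have [u uw iu] := reach_last iw iw'.
  by apply: connect_trans (IH u uw iu) (connect1 _); apply: inG.
case: ifP => iv.
  apply: rho_uniq => //; last exact: P.
  apply: isroot_reattach; first exact: rho_isroot.
  by apply: contraNneq nik => <-; apply: rho_reach1.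
apply: rho_uniq => //; last by apply: Q; rewrite iv.
apply: isroot_reattach; first exact: rho_isroot.
by apply/eqP => e; move: (rho_reach1 v fF); rewrite e iv.
Qed.

Lemma reattach_card_root F i k : isroot F i -> #|reattach F i k| = #|F|.+1.
Proof.
move=> /isrootP ri; rewrite /reattach.
have -> : [set e in F | e.2 != i] = F.
  apply/setP => [[u v]]; rewrite inE /=; case: (eqVneq v i) => [->|]; last by rewrite andbT.
  by rewrite (negbTE (ri u)).
by rewrite setUC cardsU1 ri.
Qed.

Lemma filter_parent F p i : indeg1 F -> (p, i) \in F ->
  [set e in F | e.2 != i] = F :\ (p, i).
Proof.
move=> i1 pi; apply/setP => [[u v]]; rewrite !inE /= xpair_eqE.
case: (eqVneq v i) => [->|vi]; rewrite ?andbF ?andbT //=.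
case: (boolP ((u, i) \in F)) => ui; rewrite ?andbF //.
by rewrite (i1 _ _ _ ui pi) eqxx.
Qed.

Lemma reattach_card F i k p : indeg1 F -> (p, i) \in F -> #|reattach F i k| = #|F|.
Proof.
move=> i1 pi; rewrite /reattach (filter_parent i1 pi) setUC cardsU1.
rewrite (cardsD1 (p, i) F) pi !inE negb_and negbK.
case: (boolP ((k, i) \in F)) => ki; last by rewrite orbT.
by rewrite (i1 _ _ _ ki pi) eqxx.
Qed.

Lemma reattach_back F i k p : indeg1 F -> (p, i) \in F ->
  reattach (reattach F i k) i p = F.
Proof.
move=> i1 pi; apply/setP => e; rewrite !reattachE.
case: e => u v /=; rewrite !xpair_eqE.
case: (eqVneq v i) => [->|vi]; rewrite ?andbF ?andbT ?orbF //=.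
apply/idP/idP => [/eqP->//|ui]; by rewrite (i1 _ _ _ ui pi).
Qed.

Lemma reroot_forest F r w x : dforest F -> isroot F r -> w != r ->
  connect (darc F) w x -> dforest (reroot F r w x).
Proof.
case=> i1 [h hP] rr wr wx.
have nwr : ~~ connect (darc F) w r.
  by apply/negP => /(root_reach rr) e; rewrite e eqxx in wr.
split.
  move=> u u' v; rewrite !rerootE.
  case/orP=> [/andP[uv vi]|/eqP[eu ev]]; case/orP=> [/andP[u'v vi']|/eqP[eu' ev']].
  - exact: i1 uv u'v.
  - by subst v; move/isrootP: rr => /(_ u); rewrite uv.
  - by subst v; move/isrootP: rr => /(_ u'); rewrite u'v.
  - by rewrite eu eu'.
exists (fun v => h v + (~~ connect (darc F) w v) * (h x).+1)%N.
move=> u v; rewrite rerootE => /orP[/andP[uv vi]|/eqP[-> ->]].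
  case: (boolP (connect (darc F) w u)) => iu.
    have iv : connect (darc F) w v := connect_trans iu (connect1 uv).
    by rewrite iv /= !mul0n !addn0; apply: hP.
  by rewrite (nreach_arc i1 uv vi iu) ltn_add2r; apply: hP.
by rewrite wx nwr mul0n addn0 mul1n addnS ltnS leq_addl.
Qed.

Lemma reroot_props F r w x : dforest F -> isroot F r -> w != r ->
  connect (darc F) w x -> rho F w = r ->
  [/\ forall v, rho (reroot F r w x) v = if rho F v == r then w else rho F v,
      isroot (reroot F r w x) w &
      forall v, ~~ connect (darc F) w v -> rho F v = r ->
        connect (darc (reroot F r w x)) r v].
Proof.
move=> fF rr wr wx rw; have fG := reroot_forest fF rr wr wx.
set G := reroot F r w x.
have inG : forall u v, (u, v) \in F -> v != w -> (u, v) \in G.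
  by move=> u v uv vw; rewrite rerootE uv vw.
have Q1 : forall v, connect (darc F) w v -> connect (darc G) w v.
  apply: (forest_ind fF.2) => v IH wv.
  case: (eqVneq v w) => [->|vw]; first exact: connect0.
  have wv' : w != v by rewrite eq_sym.
  have [u uv wu] := reach_last wv wv'.
  by apply: connect_trans (IH u uv wu) (connect1 _); apply: inG.
have Q4 : forall v, ~~ connect (darc F) w v -> rho F v = r -> connect (darc G) r v.
  apply: (forest_ind fF.2) => v IH nwv rv.
  case: (boolP (isroot F v)) => [rtv|/nrootP[u uv]].
    by rewrite -rv rho_root // connect0.
  have vw : v != w by apply: contraNneq nwv => ->; apply: connect0.
  have nwu : ~~ connect (darc F) w u.
    by apply: contraNN nwv => iu; apply: connect_trans iu (connect1 uv).
  apply: connect_trans (IH u uv nwu _) (connect1 _); first by rewrite (rho_arc fF uv).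
  exact: inG.
have Q2 : forall v, ~~ connect (darc F) w v -> rho F v = r -> connect (darc G) w v.
  move=> v nwv rv; apply: connect_trans (Q4 v nwv rv).
  by apply: connect_trans (Q1 x wx) (connect1 _); rewrite /darc /G rerootE; apply/orP; right.
have Q3 : forall v, rho F v != r -> connect (darc G) (rho F v) v.
  apply: (forest_ind fF.2) => v IH rv.
  case: (boolP (isroot F v)) => [rtv|/nrootP[u uv]].
    by rewrite rho_root // connect0.
  have vw : v != w by apply: contraNneq rv => ->; rewrite rw.
  rewrite -(rho_arc fF uv); apply: connect_trans (IH u uv _) (connect1 _).
    by rewrite (rho_arc fF uv).
  exact: inG.
have rootw : isroot G w.
  apply/isrootP => u; rewrite rerootE eqxx andbF /= xpair_eqE negb_and.
  by rewrite eq_sym wr orbT.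
split => // v.
case: ifP => [/eqP rv|/negbT rv].
  apply: rho_uniq => //; case: (boolP (connect (darc F) w v)) => wv; first exact: Q1.
  exact: Q2.
apply: rho_uniq => //; last exact: Q3.
apply/isrootP => u; rewrite rerootE negb_or negb_and.
have := rho_isroot v fF => /isrootP /(_ u) ->; rewrite /= xpair_eqE negb_and.
by rewrite rv orbT.
Qed.

Lemma reroot_card F r w x p : indeg1 F -> isroot F r -> (p, w) \in F ->
  #|reroot F r w x| = #|F|.
Proof.
move=> i1 /isrootP rr pw; rewrite /reroot (filter_parent i1 pw) setUC cardsU1.
rewrite (cardsD1 (p, w) F) pw !inE negb_and negbK rr orbT.
by [].
Qed.

Lemma reroot_back F r w x y : indeg1 F -> isroot F r -> (y, w) \in F ->
  reroot (reroot F r w x) w r y = F.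
Proof.
move=> i1 /isrootP rr yw; apply/setP => e; rewrite !rerootE.
case: e => u v /=; rewrite !xpair_eqE.
case: (eqVneq v r) => [->|vr]; rewrite ?andbF ?andbT ?orbF /=.
  case: (eqVneq r w) => [erw|rw]; last by rewrite andbF (negbTE (rr u)).
  by subst w; rewrite (negbTE (rr y)) in yw.
case: (eqVneq v w) => [->|vw]; rewrite ?andbF ?andbT ?orbF //=.
apply/idP/idP => [/eqP->//|uw]; by rewrite (i1 _ _ _ uw yw).
Qed.

Definition par F v := odflt v [pick u | (u, v) \in F].

Lemma parE F u v : indeg1 F -> (u, v) \in F -> par F v = u.
Proof.
move=> i1 uv; rewrite /par; case: pickP => [u' u'v|/(_ u)]; last by rewrite uv.
exact: i1 u'v uv.
Qed.

Definition child F j m := odflt j [pick c | ((j, c) \in F) && connect (darc F) c m].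

Lemma child_uniq F j c c' m : dforest F -> (j, c) \in F -> (j, c') \in F ->
  connect (darc F) c m -> connect (darc F) c' m -> c = c'.
Proof.
move=> fF jc jc' cm c'm.
suff H : forall d d', (j, d) \in F -> (j, d') \in F -> connect (darc F) d d' -> d = d'.
  by case/orP: (reach_lin fF cm c'm) => ?; [apply: H | apply/esym; apply: H].
move=> d d' jd jd' dd'; apply/eqP; apply/negPn/negP => dnd'.
have [u ud' du] := reach_last dd' dnd'.
rewrite (fF.1 _ _ _ ud' jd') in du.
by move: (acyc fF.2 jd); rewrite du.
Qed.

Lemma childP F j m : connect (darc F) j m -> j != m ->
  (j, child F j m) \in F /\ connect (darc F) (child F j m) m.
Proof.
move=> jm njm; rewrite /child; case: pickP => [c /andP[]//|none].
have [c jc cm] := reach_first jm njm; by move: (none c); rewrite jc cm.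
Qed.

Lemma childE F j c m : dforest F -> (j, c) \in F -> connect (darc F) c m ->
  child F j m = c.
Proof.
move=> fF jc cm.
have jm : connect (darc F) j m := connect_trans (connect1 jc) cm.
have njm : j != m.
  apply/eqP => e; subst m; by move: (acyc fF.2 jc); rewrite cm.
have [jc' c'm] := childP jm njm.
exact: child_uniq fF jc' jc c'm cm.
Qed.

End Ops.
Local Open Scope ring_scope.

Section Weights.
Variables (R : realFieldType) (n : nat) (a : 'M[R]_n).
Hypothesis a_diag : forall i, a i i = 0.
Hypothesis a_nneg : forall i j, 0 <= a i j.
Implicit Types F G : {set 'I_n * 'I_n}.

Definition mf F := max_out_forest a F.

Lemma mfP F : mf F <-> [/\ subgraph a F, dforest F & #|F| = max_forest_size a].
Proof.
rewrite /mf /max_out_forest; split.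
  by case/andP=> /out_forestP [sF fF] /eqP cF.
by case=> sF fF cF; rewrite cF eqxx andbT; apply/out_forestP.
Qed.

Lemma forest_le F : subgraph a F -> dforest F -> (#|F| <= max_forest_size a)%N.
Proof.
move=> sF fF; rewrite /max_forest_size.
by apply: (leq_bigmax_cond (P := fun F => out_forest a F)); apply/out_forestP.
Qed.

Lemma subgraphP F : reflect (forall u v, (u, v) \in F -> (u != v) && (0 < a v u))
  (subgraph a F).
Proof.
apply: (iffP forall_inP) => [H u v uv|H [u v] uv]; first exact: H uv.
exact: H.
Qed.

Lemma sub_arc F u v : subgraph a F -> (u, v) \in F -> 0 < a v u.
Proof. by move/subgraphP => H /H /andP[]. Qed.

Lemma pos_neq u v : 0 < a v u -> u != v.
Proof. by apply: contraTneq => ->; rewrite a_diag ltxx. Qed.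

Lemma subgraph_reattach F i k : subgraph a F -> 0 < a i k ->
  subgraph a (reattach F i k).
Proof.
move=> /subgraphP sF aik; apply/subgraphP => u v; rewrite reattachE.
case/orP=> [/andP[uv _]|/eqP[-> ->]]; first exact: sF.
by rewrite aik pos_neq.
Qed.

Lemma subgraph_reroot F r w x : subgraph a F -> 0 < a r x ->
  subgraph a (reroot F r w x).
Proof.
move=> /subgraphP sF arx; apply/subgraphP => u v; rewrite rerootE.
case/orP=> [/andP[uv _]|/eqP[-> ->]]; first exact: sF.
by rewrite arx pos_neq.
Qed.

Lemma weight_pos F : subgraph a F -> 0 < weight a F.
Proof.
move=> sF; apply: prodr_gt0 => [[u v]] uv /=; exact: sub_arc sF uv.
Qed.

Lemma weight_swap F e e' : e \in F -> e' \notin F :\ e ->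
  weight a ((F :\ e) :|: [set e']) * a e.2 e.1 = weight a F * a e'.2 e'.1.
Proof.
move=> eF e'F; rewrite /weight setUC big_setU1 //= (big_setD1 e eF) /=.
by rewrite [LHS]mulrC mulrA [RHS]mulrC mulrA [a e'.2 e'.1 * a e.2 e.1]mulrC.
Qed.

Lemma weight_reattach F i k p : indeg1 F -> (p, i) \in F ->
  weight a (reattach F i k) * a i p = weight a F * a i k.
Proof.
move=> i1 pi; rewrite /reattach (filter_parent i1 pi).
apply: (weight_swap (e := (p, i)) (e' := (k, i))) => //.
rewrite !inE negb_and negbK; case: (boolP ((k, i) \in F)) => ki; last by rewrite orbT.
by rewrite (i1 _ _ _ ki pi) eqxx.
Qed.

Lemma weight_reroot F r w x p : indeg1 F -> isroot F r -> (p, w) \in F ->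
  weight a (reroot F r w x) * a w p = weight a F * a r x.
Proof.
move=> i1 /isrootP rr pw; rewrite /reroot (filter_parent i1 pw).
apply: (weight_swap (e := (p, w)) (e' := (x, r))) => //.
by rewrite !inE negb_and rr orbT.
Qed.

Lemma merge_root F j m : mf F -> isroot F j -> 0 < a j m -> rho F m = j.
Proof.
case/mfP=> sF fF cF rj ajm; apply/eqP/negPn/negP => nm.
have njm : ~~ connect (darc F) j m.
  by apply: contra nm => jm; rewrite -(rho_reach fF jm) rho_root.
have fG := reattach_forest fF njm.
have sG := subgraph_reattach sF ajm.
have := forest_le sG fG; rewrite reattach_card_root // cF.
by rewrite ltnn.
Qed.

Lemma nonneg0 u v : ~~ (0 < a u v) -> a u v = 0.
Proof. by rewrite lt0r a_nneg andbT negbK => /eqP. Qed.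

Lemma exists_mf : exists F, mf F.
Proof.
have : (0 < #|[pred F | out_forest a F]|)%N.
  apply/card_gt0P; exists set0; rewrite inE; apply/out_forestP; split.
    by apply/subgraphP => u v; rewrite inE.
  split; first by move=> u u' v; rewrite inE.
  by exists (fun _ => 0%N) => u v; rewrite inE.
case/(eq_bigmax_cond (fun F : {set 'I_n * 'I_n} => #|F|)) => F.
rewrite inE => oF e; exists F; rewrite /mf /max_out_forest oF /=.
by rewrite /max_forest_size e.
Qed.

Definition Zs := \sum_(F | mf F) weight a F.

Lemma Zs_gt0 : 0 < Zs.
Proof.
have [F0 mF0] := exists_mf; rewrite /Zs (bigD1 F0) //=.
apply: ltr_wpDr; first by apply: sumr_ge0 => F /andP[/mfP[sF _ _] _]; apply/ltW/weight_pos.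
by case/mfP: mF0 => sF _ _; apply: weight_pos.
Qed.

Definition fs i j := \sum_(F | mf F && (rho F i == j)) weight a F.

Lemma JbarE i j : Jbar a i j = fs i j / Zs.
Proof.
rewrite /Jbar mxE /fs /Zs; congr (_ / _); apply: eq_bigl => F.
rewrite -/(mf F); case: (boolP (mf F)) => // /mfP[_ fF _].
by rewrite itrE.
Qed.

Lemma kirchE i k : kirchhoff a i k = (i == k)%:R * (\sum_l a i l) - a i k.
Proof.
rewrite mxE; case: (eqVneq i k) => [<-|ik].
  by rewrite [in RHS](bigD1 i) //= a_diag add0r mul1r subr0.
by rewrite mul0r sub0r.
Qed.

Lemma kirch_mulE p (M : 'M[R]_(n, p)) i j :
  (kirchhoff a *m M) i j = \sum_k a i k * (M i j - M k j).
Proof.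
rewrite mxE.
under eq_bigr do rewrite kirchE mulrBl.
rewrite sumrB [X in X - _](bigD1 i) //= eqxx mul1r [X in _ + X - _]big1 ?addr0; last first.
  by move=> k ki; rewrite eq_sym (negbTE ki) !mul0r.
under [X in _ = X]eq_bigr do rewrite mulrBr.
by rewrite sumrB mulr_suml.
Qed.

Lemma mul_kirchE p (M : 'M[R]_(p, n)) i j :
  (M *m kirchhoff a) i j = M i j * (\sum_l a j l) - \sum_k M i k * a k j.
Proof.
rewrite mxE.
under eq_bigr do rewrite kirchE mulrBr.
rewrite sumrB [X in X - _](bigD1 j) //= eqxx mul1r [X in _ + X - _]big1 ?addr0 //.
by move=> k kj; rewrite (negbTE kj) mul0r mulr0.
Qed.

End Weights.

Section LJ.
Variables (R : realFieldType) (n : nat) (a : 'M[R]_n).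
Hypothesis a_diag : forall i, a i i = 0.
Hypothesis a_nneg : forall i j, 0 <= a i j.
Implicit Types F G : {set 'I_n * 'I_n}.

Lemma fsE i j : fs a i j = \sum_(F | mf a F) weight a F * (rho F i == j)%:R.
Proof.
rewrite /fs big_mkcondr; apply: eq_bigr => F _.
by case: eqP; rewrite ?mulr1 ?mulr0.
Qed.

Lemma restrict_sum (I : finType) (P C : pred I) (g : I -> R) :
  (forall x, P x -> ~~ C x -> g x = 0) ->
  \sum_(x | P x) g x = \sum_(x | P x && C x) g x.
Proof.
move=> H; rewrite (bigID C) /= [X in _ + X]big1 ?addr0 //.
by move=> x /andP[]; apply: H.
Qed.

Variable i : 'I_n.

Definition Dm (p : 'I_n * {set 'I_n * 'I_n}) :=
  [&& mf a p.2, 0 < a i p.1 & rho p.2 i != rho p.2 p.1].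

Definition phi' (p : 'I_n * {set 'I_n * 'I_n}) := (par p.2 i, reattach p.2 i p.1).

Lemma phiD p (j : 'I_n) : Dm p -> [/\ Dm (phi' p), phi' (phi' p) = p &
  a i (phi' p).1 * weight a (phi' p).2 * (rho (phi' p).2 i == j)%:R =
  a i p.1 * weight a p.2 * (rho p.2 p.1 == j)%:R].
Proof.
case: p => k F /and3P[/= mF aik rik]; have [sF fF cF] := (mfP a F).1 mF.
have nri : ~~ isroot F i.
  apply/negP => ri; move: rik; rewrite (merge_root a_diag mF ri aik) rho_root //.
  by rewrite eqxx.
case/nrootP: nri => q qi; have pq : par F i = q := parE fF.1 qi.
have nik : ~~ connect (darc F) i k.
  by apply: contra rik => ik; rewrite (rho_reach fF ik).
have fG := reattach_forest fF nik.
have sG := subgraph_reattach a_diag sF aik.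
have mG : mf a (reattach F i k).
  by apply/mfP; split => //; rewrite (@reattach_card _ F i k q fF.1 qi).
have rG := fun v => @rho_reattach _ F i k v fF nik.
have rGi : rho (reattach F i k) i = rho F k by rewrite rG connect0.
have rGq : rho (reattach F i k) q = rho F i.
  by rewrite rG (negbTE (acyc fF.2 qi)) (rho_arc fF qi).
rewrite /phi' /= pq; split.
- by rewrite /Dm /= mG (sub_arc sF qi) rGi rGq eq_sym rik.
- have kiG : (k, i) \in reattach F i k by rewrite reattachE; apply/orP; right.
  by rewrite (parE fG.1 kiG) (@reattach_back _ F i k q fF.1 qi).
- rewrite rGi; congr (_ * _).
  by rewrite mulrC (@weight_reattach R n a F i k q fF.1 qi) mulrC.
Qed.

Definition phi p := if Dm p then phi' p else p.

Lemma phi_inv : involutive phi.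
Proof.
move=> p; rewrite /phi; case: (boolP (Dm p)) => Dp; last by rewrite (negbTE Dp).
by have [D2 e2 _] := phiD i Dp; rewrite D2 e2.
Qed.

Lemma Dm_phi p : Dm (phi p) = Dm p.
Proof.
rewrite /phi; case: (boolP (Dm p)) => Dp; last by rewrite (negbTE Dp).
by have [D2 _ _] := phiD i Dp; rewrite D2.
Qed.

Lemma LJ_row j : \sum_k a i k * (fs a i j - fs a k j) = 0.
Proof.
have e : \sum_k a i k * (fs a i j - fs a k j) =
  \sum_(p : 'I_n * {set 'I_n * 'I_n} | mf a p.2)
     (a i p.1 * weight a p.2 * (rho p.2 i == j)%:R -
      a i p.1 * weight a p.2 * (rho p.2 p.1 == j)%:R).
  rewrite (eq_bigr (fun k => \sum_(F | mf a F) (a i k * weight a F * (rho F i == j)%:R -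
      a i k * weight a F * (rho F k == j)%:R))).
    by rewrite pair_big.
  move=> k _; rewrite !fsE -sumrB mulr_sumr; apply: eq_bigr => F _.
  by rewrite mulrBr !mulrA.
rewrite e (restrict_sum (C := fun p => (0 < a i p.1) && (rho p.2 i != rho p.2 p.1))).
  rewrite sumrB; apply/eqP; rewrite subr_eq0; apply/eqP.
  rewrite (eq_bigl Dm); last by move=> p; rewrite /Dm andbA.
  rewrite [in RHS](eq_bigl Dm); last by move=> p; rewrite /Dm andbA.
  rewrite (reindex_inj (inv_inj phi_inv)) /=.
  apply: eq_big => p; first exact: Dm_phi.
  by move=> Dp; rewrite Dm_phi in Dp; rewrite /phi Dp; have [_ _ ->] := phiD j Dp.
move=> [k F] /= _; rewrite negb_and negbK => /orP[/(nonneg0 a_nneg)->|/eqP->].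
  by rewrite !mul0r subrr.
by rewrite subrr.
Qed.

End LJ.

Lemma LJ0 (R : realFieldType) (n : nat) (a : 'M[R]_n) :
  (forall i, a i i = 0) -> (forall i j, 0 <= a i j) ->
  kirchhoff a *m Jbar a = 0.
Proof.
move=> a_diag a_nneg; apply/matrixP => i j.
rewrite (kirch_mulE a_diag) [RHS]mxE.
under eq_bigr do rewrite !JbarE -mulrBl mulrA.
by rewrite -mulr_suml LJ_row // mul0r.
Qed.

Section JL.
Variables (R : realFieldType) (n : nat) (a : 'M[R]_n).
Hypothesis a_diag : forall i, a i i = 0.
Hypothesis a_nneg : forall i j, 0 <= a i j.
Implicit Types F G : {set 'I_n * 'I_n}.
Variables i j : 'I_n.

Definition Pd (x : 'I_n * {set 'I_n * 'I_n}) :=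
  [&& mf a x.2, rho x.2 i == j & 0 < a j x.1].
Definition Qd (y : 'I_n * {set 'I_n * 'I_n}) :=
  [&& mf a y.2, rho y.2 i == y.1 & 0 < a y.1 j].
Definition psi (x : 'I_n * {set 'I_n * 'I_n}) :=
  (child x.2 j x.1, reroot x.2 j (child x.2 j x.1) x.1).
Definition psi' (y : 'I_n * {set 'I_n * 'I_n}) :=
  (par y.2 j, reroot y.2 y.1 j j).

Lemma psiP x : Pd x -> [/\ Qd (psi x), psi' (psi x) = x &
  a (psi x).1 j * weight a (psi x).2 = a j x.1 * weight a x.2].
Proof.
case: x => m F /and3P[/= mF /eqP rFi ajm]; have [sF fF cF] := (mfP a F).1 mF.
have rj : isroot F j by rewrite -rFi; apply: rho_isroot.
have rm : rho F m = j := merge_root a_diag mF rj ajm.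
have mj : m != j := pos_neq a_diag ajm.
have jm : connect (darc F) j m by rewrite -rm; apply: rho_reach1.
have jnm : j != m by rewrite eq_sym.
have [jc cm] := childP jm jnm; set c := child F j m in jc cm *.
have cj : c != j.
  by move/subgraphP: sF => /(_ _ _ jc) /andP[]; rewrite eq_sym.
have rc : rho F c = j by rewrite -(rho_arc fF jc) rho_root.
have [rG _ _] := reroot_props fF rj cj cm rc.
have fG := reroot_forest fF rj cj cm.
have sG := @subgraph_reroot R n a a_diag F j c m sF ajm.
have mG : mf a (reroot F j c m).
  by apply/mfP; split => //; rewrite (@reroot_card _ F j c m j fF.1 rj jc).
rewrite /psi /psi' /=; split.
- by rewrite /Qd /= mG rG rFi eqxx eqxx (sub_arc sF jc).
- have mjG : (m, j) \in reroot F j c m by rewrite rerootE; apply/orP; right.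
  by rewrite (parE fG.1 mjG) (@reroot_back _ F j c m j fF.1 rj jc).
- by rewrite mulrC (@weight_reroot R n a F j c m j fF.1 rj jc) mulrC.
Qed.

Lemma psi'P y : Qd y -> Pd (psi' y) /\ psi (psi' y) = y.
Proof.
case: y => k F /and3P[/= mF /eqP rFi akj]; have [sF fF cF] := (mfP a F).1 mF.
have rk : isroot F k by rewrite -rFi; apply: rho_isroot.
have rjk : rho F j = k := merge_root a_diag mF rk akj.
have jk : j != k := pos_neq a_diag akj.
have : ~~ isroot F j.
  by apply/negP => rtj; move: jk; rewrite -rjk rho_root // eqxx.
case/nrootP=> p pj; have parj : par F j = p := parE fF.1 pj.
have [rG _ reachG] := reroot_props fF rk jk (connect0 _ j) rjk.
have fG := reroot_forest fF rk jk (connect0 _ j).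
have sG := @subgraph_reroot R n a a_diag F k j j sF akj.
have mG : mf a (reroot F k j j).
  by apply/mfP; split => //; rewrite (@reroot_card _ F k j j p fF.1 rk pj).
rewrite /psi' /= parj; split.
  by rewrite /Pd /= mG rG rFi eqxx eqxx (sub_arc sF pj).
have jkG : (j, k) \in reroot F k j j by rewrite rerootE; apply/orP; right.
have kp : connect (darc (reroot F k j j)) k p.
  by apply: reachG; [apply: acyc fF.2 pj | rewrite (rho_arc fF pj)].
rewrite /psi /= (childE fG jkG kp).
by rewrite (@reroot_back _ F k j j p fF.1 rk pj).
Qed.

Lemma JL_row : fs a i j * (\sum_l a j l) = \sum_k fs a i k * a k j.
Proof.
have eL : fs a i j * (\sum_l a j l) =
    \sum_(x : 'I_n * {set 'I_n * 'I_n} | Pd x) a j x.1 * weight a x.2.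
  rewrite mulr_sumr.
  rewrite (eq_bigr (fun l => \sum_(F | mf a F && (rho F i == j)) a j l * weight a F));
    last by move=> l _; rewrite /fs mulr_suml; apply: eq_bigr => F _; rewrite mulrC.
  rewrite pair_big /= (restrict_sum (C := fun x => 0 < a j x.1)).
    by apply: eq_bigl => x; rewrite /Pd andbA.
  by move=> x _ /(nonneg0 a_nneg) ->; rewrite mul0r.
have eR : \sum_k fs a i k * a k j =
    \sum_(y : 'I_n * {set 'I_n * 'I_n} | Qd y) a y.1 j * weight a y.2.
  rewrite (eq_bigr (fun k => \sum_(F | mf a F && (rho F i == k)) a k j * weight a F));
    last by move=> k _; rewrite /fs mulr_suml; apply: eq_bigr => F _; rewrite mulrC.
  rewrite pair_big_dep /= (restrict_sum (C := fun x => 0 < a x.1 j)).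
    by apply: eq_bigl => x; rewrite /Qd andbA.
  by move=> x _ /(nonneg0 a_nneg) ->; rewrite mul0r.
rewrite eL eR [RHS](reindex_onto psi psi'); last by move=> y Qy; case: (psi'P Qy).
apply: eq_big => x.
  apply/idP/andP => [Px|[Qx /eqP e]].
    by have [Q2 e2 _] := psiP Px; rewrite Q2 e2 eqxx.
  by have [Pp _] := psi'P Qx; rewrite e in Pp.
by move=> Px; have [_ _ ->] := psiP Px.
Qed.

End JL.

Lemma JL0 (R : realFieldType) (n : nat) (a : 'M[R]_n) :
  (forall i, a i i = 0) -> (forall i j, 0 <= a i j) ->
  Jbar a *m kirchhoff a = 0.
Proof.
move=> a_diag a_nneg; apply/matrixP => i j.
rewrite (mul_kirchE a_diag) [RHS]mxE.
rewrite [X in _ - X](eq_bigr (fun k => fs a i k * a k j / Zs a)); last first.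
  by move=> k _; rewrite JbarE mulrAC.
rewrite JbarE mulrAC -mulr_suml -mulrBl JL_row //.
by rewrite subrr mul0r.
Qed.

Lemma exists_max (R : realDomainType) (I : finType) (P : pred I) (f : I -> R) i0 :
  P i0 -> exists2 v, P v & forall q, P q -> f q <= f v.
Proof.
move=> Pi0; case: (@arg_maxP _ R I i0 P f Pi0) => v Pv H.
by exists v.
Qed.

Section Harm.
Variables (R : realFieldType) (n : nat) (a : 'M[R]_n).
Hypothesis a_diag : forall i, a i i = 0.
Hypothesis a_nneg : forall i j, 0 <= a i j.
Implicit Types F G : {set 'I_n * 'I_n}.

Definition gr : rel 'I_n := fun u v => 0 < a v u.

Lemma sub_gr F u v : subgraph a F -> connect (darc F) u v -> connect gr u v.
Proof.
move=> sF; apply: connect_sub => x y xy; apply: connect1.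
exact: sub_arc sF xy.
Qed.

Lemma harm_closed (x : 'cV[R]_n) q k : kirchhoff a *m x = 0 ->
  (forall l, 0 < a q l -> x l 0 <= x q 0) -> 0 < a q k -> x k 0 = x q 0.
Proof.
move=> Lx H aqk.
have e : \sum_l a q l * (x q 0 - x l 0) = 0.
  by rewrite -(kirch_mulE a_diag) Lx mxE.
have T : forall l, true -> 0 <= a q l * (x q 0 - x l 0).
  move=> l _; case: (boolP (0 < a q l)) => al.
    by apply: mulr_ge0; [exact: a_nneg | rewrite subr_ge0; exact: H].
  by rewrite (nonneg0 a_nneg al) mul0r.
have := @psumr_eq0P _ _ _ _ T e k isT.
by move/eqP; rewrite mulf_eq0 (gt_eqF aqk) /= subr_eq0 => /eqP ->.
Qed.

Lemma lemmaS F0 r q : mf a F0 -> isroot F0 r -> connect gr q r -> connect gr r q.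
Proof.
move=> mF0 rF0 qr.
pose Pm F := mf a F && isroot F r.
pose T F := [set v | rho F v == r].
have P0 : Pm F0 by rewrite /Pm mF0 rF0.
case: (arg_minnP (fun F => #|T F|) P0) => F /andP[mF rF] Fmin.
have [sF fF cF] := (mfP a F).1 mF.
case: (boolP (q \in T F)) => qT.
  apply: (sub_gr sF); rewrite /T inE in qT; rewrite -(eqP qT); exact: rho_reach1.
have rT : r \in T F by rewrite /T inE rho_root.
have : ~~ [forall u, forall w, gr u w ==> (w \in T F) ==> (u \in T F)].
  apply/negP => /forallP H; move/negP: qT; apply.
  apply: (reach_closed (S := fun v => v \in T F)) qr rT => u w uw wT.
  by move/forallP: (H u) => /(_ w); rewrite uw wT.
case/forallPn => u /forallPn [w]; rewrite !negb_imply => /and3P[uw wT uT].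
rewrite /gr in uw; rewrite /T inE in wT; rewrite /T inE in uT.
case: (eqVneq w r) => [ewr|wr].
  by subst w; move: uT; rewrite (merge_root a_diag mF rF uw) eqxx.
have : ~~ isroot F w.
  by apply/negP => rw; move: wT; rewrite rho_root // (negbTE wr).
case/nrootP=> p pw.
have nwu : ~~ connect (darc F) w u.
  by apply: contra uT => wu; rewrite -(rho_reach fF wu).
have fG := reattach_forest fF nwu.
have sG := subgraph_reattach a_diag sF uw.
have mG : mf a (reattach F w u).
  by apply/mfP; split => //; rewrite (@reattach_card _ F w u p fF.1 pw).
have rG : isroot (reattach F w u) r by apply: isroot_reattach => //; rewrite eq_sym.
have PG : Pm (reattach F w u) by rewrite /Pm mG rG.
suff lt : (#|T (reattach F w u)| < #|T F|)%N.
  by move: (Fmin _ PG); rewrite leqNgt lt.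
apply: proper_card; apply/properP; split.
  apply/subsetP => v; rewrite /T !inE (@rho_reattach _ F w u v fF nwu).
  by case: ifP => _ //; rewrite (negbTE uT).
exists w; first by rewrite /T inE.
by rewrite /T inE (@rho_reattach _ F w u w fF nwu) connect0 (negbTE uT).
Qed.

Lemma harm_root (x : 'cV[R]_n) F0 r F : kirchhoff a *m x = 0 ->
  mf a F0 -> isroot F0 r -> mf a F -> x (rho F r) 0 = x r 0.
Proof.
move=> Lx mF0 rF0 mF; have [sF fF _] := (mfP a F).1 mF.
pose B := [pred q | connect gr q r].
have rB : B r by rewrite /B /= connect0.
have [v0 Bv0 vmax] := exists_max (fun q => x q 0) rB.
have cl : forall u w, gr u w -> (B w && (x w 0 == x v0 0)) -> B u && (x u 0 == x v0 0).
  move=> u w uw /andP[Bw /eqP xw].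
  have Bu : B u by rewrite /B /= (connect_trans (connect1 uw) Bw).
  rewrite Bu /=; apply/eqP; rewrite -xw; apply: (harm_closed Lx) => // l al.
  rewrite xw; apply: vmax; rewrite /B /=.
  exact: connect_trans (connect1 (al : gr l w)) Bw.
have allB : forall q, B q -> x q 0 = x v0 0.
  move=> q Bq; have qv0 : connect gr q v0.
    by apply: connect_trans Bq (lemmaS mF0 rF0 Bv0).
  by have /andP[_ /eqP] := reach_closed cl qv0 (introT andP (conj Bv0 (eqxx _))).
rewrite (allB r rB) allB //; rewrite /B /=.
exact: sub_gr sF (rho_reach1 r fF).
Qed.

End Harm.

Section Fix.
Variables (R : realFieldType) (n : nat) (a : 'M[R]_n).
Hypothesis a_diag : forall i, a i i = 0.
Hypothesis a_nneg : forall i j, 0 <= a i j.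
Implicit Types F G : {set 'I_n * 'I_n}.

Lemma maxp (y : 'cV[R]_n) F0 : kirchhoff a *m y = 0 -> mf a F0 ->
  (forall r, isroot F0 r -> y r 0 = 0) -> forall q, y q 0 <= 0.
Proof.
move=> Ly mF0 H q; have [sF fF _] := (mfP a F0).1 mF0.
have [v0 _ vmax] := exists_max (P := predT) (fun q => y q 0) (i0 := q) isT.
have cl : forall u w, gr a u w -> (y w 0 == y v0 0) -> (y u 0 == y v0 0).
  move=> u w uw /eqP yw; apply/eqP; rewrite -yw.
  apply: (harm_closed a_diag a_nneg Ly) => // l _; rewrite yw; exact: vmax.
have := reach_closed cl (sub_gr sF (rho_reach1 v0 fF)) (eqxx _).
rewrite H ?rho_isroot // => /eqP e.
by rewrite e; apply: vmax.
Qed.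

Lemma Jfix (x : 'cV[R]_n) : kirchhoff a *m x = 0 -> Jbar a *m x = x.
Proof.
move=> Lx; have [F0 mF0] := exists_mf a.
set y := x - Jbar a *m x.
have Ly : kirchhoff a *m y = 0.
  by rewrite /y mulmxBr Lx mulmxA LJ0 // mul0mx subrr.
have y0 : forall r, isroot F0 r -> y r 0 = 0.
  move=> r rr; rewrite /y !mxE.
  have e : \sum_j fs a r j * x j 0 = Zs a * x r 0.
    rewrite (eq_bigr (fun j => \sum_(F | mf a F) weight a F * (rho F r == j)%:R * x j 0));
      last by move=> j _; rewrite fsE mulr_suml.
    rewrite exchange_big /= /Zs mulr_suml; apply: eq_bigr => F mF.
    rewrite (bigD1 (rho F r)) //= eqxx mulr1 big1 ?addr0.
      by rewrite (harm_root a_diag a_nneg Lx mF0 rr mF).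
    by move=> j jr; rewrite eq_sym (negbTE jr) mulr0 mul0r.
  rewrite (eq_bigr (fun j => fs a r j * x j 0 / Zs a)); last first.
    by move=> j _; rewrite JbarE mulrAC.
  rewrite -mulr_suml e mulrAC divff ?mul1r ?subrr //.
  by rewrite (gt_eqF (Zs_gt0 a)).
have yz : y = 0.
  apply/matrixP => q j; rewrite (ord1 j) [RHS]mxE; apply/eqP; rewrite eq_le.
  rewrite (maxp Ly mF0 y0) /=.
  have := @maxp (- y) F0 _ mF0 _ q; rewrite mxE oppr_le0; apply.
    by rewrite mulmxN Ly oppr0.
  by move=> r rr; rewrite mxE y0 ?oppr0.
by move/eqP: yz; rewrite subr_eq0 => /eqP e; rewrite -e.
Qed.

End Fix.

Section Final.
Variables (R : realFieldType) (n : nat) (a : 'M[R]_n).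
Hypothesis a_diag : forall i, a i i = 0.
Hypothesis a_nneg : forall i j, 0 <= a i j.

Local Notation L := (kirchhoff a).
Local Notation J := (Jbar a).

Lemma col_mulE m p (A : 'M[R]_(m, n)) (B : 'M[R]_(n, p)) j :
  A *m col j B = col j (A *m B).
Proof. by apply/matrixP => i k; rewrite !mxE; apply: eq_bigr => l _; rewrite !mxE. Qed.

Lemma JJ : J *m J = J.
Proof.
apply/matrixP => i j.
have Lc : L *m col j J = 0 by rewrite col_mulE LJ0 // col0.
move/matrixP: (Jfix a_diag a_nneg Lc) => /(_ i 0).
by rewrite col_mulE !mxE.
Qed.

Lemma LL_ker (w : 'cV[R]_n) : L *m (L *m w) = 0 -> L *m w = 0.
Proof.
move=> H; have := Jfix a_diag a_nneg H.
by rewrite mulmxA JL0 // mul0mx => <-.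
Qed.

Lemma rankLL : \rank (L *m L) = \rank L.
Proof.
apply/eqP; rewrite eqn_leq mxrankM_maxl /=.
have sub : (kermx (L *m L)^T <= kermx L^T)%MS.
  apply/rV_subP => u /sub_kermxP H; apply/sub_kermxP.
  have : L *m (L *m u^T) = 0.
    by rewrite mulmxA; apply: trmx_inj; rewrite trmx_mul trmxK trmx0 H.
  move/LL_ker => e; apply: trmx_inj; by rewrite trmx_mul trmxK e trmx0.
have := mxrankS sub; rewrite !mxrank_ker !mxrank_tr.
by rewrite leq_sub2lE // rank_leq_col.
Qed.

Lemma rankL_lt : (0 < n)%N -> (\rank L < n)%N.
Proof.
move=> n0; set u : 'rV[R]_n := const_mx 1.
have Lu : L *m u^T = 0.
  apply/matrixP => i k; rewrite (kirch_mulE a_diag) [RHS]mxE big1 // => l _.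
  by rewrite !mxE subrr mulr0.
have uk : (u <= kermx L^T)%MS.
  by apply/sub_kermxP; apply: trmx_inj; rewrite trmx_mul trmxK Lu trmx0.
have u0 : u != 0.
  apply/negP => /eqP /matrixP /(_ 0 (Ordinal n0)); rewrite !mxE => /eqP.
  by rewrite oner_eq0.
have := mxrankS uk; rewrite mxrank_ker mxrank_tr.
have : (0 < \rank u)%N by rewrite lt0n mxrank_eq0.
by move=> r0 le; have := leq_trans r0 le; rewrite subn_gt0.
Qed.

Lemma index1 : (0 < n)%N -> mxindex L = 1%N.
Proof.
move=> n0; rewrite /mxindex; case: ex_minnP => m /eqP Hm Hmin.
have le1 : (m <= 1)%N.
  by apply: Hmin; rewrite expr1 expr2 -mulmxE rankLL.
move: Hm le1; case: m {Hmin} => [|[|m]] //.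
rewrite expr0 expr1 => e _.
have : \rank (1 : 'M[R]_n) = n by apply: mxrank1.
by move=> h1; move: (rankL_lt n0); rewrite e h1 ltnn.
Qed.

Lemma rangeJ (x : 'cV[R]_n) : (exists y : 'cV[R]_n, x = J *m y) <-> L *m x = 0.
Proof.
split => [[y ->]|Lx]; first by rewrite mulmxA LJ0 // mul0mx.
by exists x; rewrite Jfix.
Qed.

Lemma kerJ (x : 'cV[R]_n) : J *m x = 0 <-> (exists y : 'cV[R]_n, x = L *m y).
Proof.
split => [Jx|[y ->]]; last by rewrite mulmxA JL0 // mul0mx.
have s1 : (L^T <= kermx J^T)%MS.
  by apply/sub_kermxP; rewrite -trmx_mul JL0 // trmx0.
have s2 : (kermx L^T <= J^T)%MS.
  apply/rV_subP => u /sub_kermxP H.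
  have Lu : L *m u^T = 0 by apply: trmx_inj; rewrite trmx_mul trmxK H trmx0.
  have e := Jfix a_diag a_nneg Lu.
  by rewrite -(trmxK u) -e trmx_mul trmxK submxMl.
have r2 := mxrankS s2; rewrite mxrank_ker !mxrank_tr in r2.
have r1 : (\rank (kermx J^T) <= \rank L^T)%N.
  rewrite mxrank_ker !mxrank_tr leq_subLR addnC -leq_subLR //.
have s3 : (kermx J^T <= L^T)%MS.
  by rewrite -(mxrank_leqif_sup s1).2 eqn_leq r1 mxrankS.
have xk : (x^T <= kermx J^T)%MS.
  by apply/sub_kermxP; rewrite -trmx_mul Jx trmx0.
have /submxP [D eD] := submx_trans xk s3.
by exists D^T; rewrite -(trmxK x) eD trmx_mul trmxK.
Qed.

End Final.

Theorem proposition6 (R : realFieldType) (n : nat) (a : 'M[R]_n)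
    (a_diag : forall i, a i i = 0) (a_nneg : forall i j, 0 <= a i j) :
  let L := kirchhoff a in
  let J := Jbar a in
  let nu := mxindex L in
  [/\ J *m J = J,
      (forall x : 'cV[R]_n, (exists y : 'cV[R]_n, x = J *m y) <-> L ^+ nu *m x = 0),
      (forall x : 'cV[R]_n, J *m x = 0 <-> (exists y : 'cV[R]_n, x = L ^+ nu *m y))
    & (0 < n)%N -> nu = 1%N].
Proof.
move=> L J nu.
have JJ' := JJ a_diag a_nneg.
case: n a a_diag a_nneg @L @J @nu JJ' => [|n'] a' ad an L J nu JJ'.
  have f0 : forall M : 'M[R]_(0, 1), M = 0 by move=> M; apply: flatmx0.
  split => // [x|x]; first by split => _; [apply: f0 | exists 0; rewrite (f0 x) mulmx0].
  by split => _; [exists 0; rewrite (f0 x) mulmx0 | apply: f0].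
rewrite /nu /L /J index1 // expr1; split => // x; [exact: rangeJ | exact: kerJ].
Qed.
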